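(* Consider the control setting described in the context, and let $M_1, M_2, \dots$ be generated by the FTRL Controller (FTRL-C) with $\sigma = \frac{\sqrt{\delta^2+2lz}}{\sqrt{2}\,\kappa_M\delta}$, where $z = p\,w\sqrt{d_u}\,\kappa_B$. Assume $h_1>0$. Then for every horizon $T\ge 1$, $$\mathcal{R}_T \le \frac{2\kappa_M}{\delta}\Big(\sqrt{2(\delta^2+2lz)}+\frac{lz}{\delta\sqrt{h_1}}\Big)\sqrt{\sum_{t=1}^T \max_{s\le t} g_s}.$$
   Context: System: $\mathbf{x}_{t+1}=A\mathbf{x}_t+B\mathbf{u}_t+\mathbf{w}_t$ for $t=1,2,\dots$, with $\mathbf{x}_t\in\mathbb{R}^{d_x}$, $\mathbf{u}_t\in\mathbb{R}^{d_u}$, $\mathbf{x}_1=0$, and disturbances $\mathbf{w}_t$ chosen arbitrarily (adversarially) subject to $\|\mathbf{w}_t\|\le w$; set $\mathbf{w}_t=0$ for $t\le 0$. The disturbance $\mathbf{w}_t$ and the cost $c_t$ are revealed after $\mathbf{u}_t$ is chosen. The spectral norm of $A$ equals $1-\delta$ with $0<\delta<1$, and $\|B\|\le\kappa_B$. Norms are Euclidean for vectors and Frobenius for matrices; $\langle X,Y\rangle=\sum_{ij}X^{(i,j)}Y^{(i,j)}$; $h_{a:b}=\sum_{s=a}^b h_s$. Policy class (disturbance-action controllers with memory $p\ge1$): a parameter is $M=[M^{[1]}|\cdots|M^{[p]}]$ with $M^{[j]}\in\mathbb{R}^{d_u\times d_x}$, restricted to $\mathcal{M}=\{M:\sum_{j=1}^p\|M^{[j]}\|\le\kappa_M\}$.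 Using parameter $M_t$ at step $t$ means playing $\mathbf{u}_t=\sum_{j=1}^p M_t^{[j]}\mathbf{w}_{t-j}$. The actual states/actions under the sequence $M_1,M_2,\dots$ are denoted $\mathbf{x}_t,\mathbf{u}_t$; for a fixed $M\in\mathcal{M}$, $\mathbf{x}_t(M),\mathbf{u}_t(M)$ denote the state and action at step $t$ had $M$ been used at every step $1,\dots,t$ (same disturbances). Costs $c_t:\mathbb{R}^{d_x}\times\mathbb{R}^{d_u}\to\mathbb{R}$ are convex and $l$-Lipschitz. Let $f_t(M)=c_t(\mathbf{x}_t(M),\mathbf{u}_t(M))$ (convex in $M$) and $G_t=\nabla f_t(M_t)$ (a (sub)gradient with respect to $M$), $g_t=\max(\|G_t\|,\|G_t\|^2)$. FTRL-C: $M_1\in\mathcal{M}$ arbitrary; for $t\ge1$, $M_{t+1}=\arg\min_{M\in\mathcal{M}}\sum_{s=1}^t\big(f_s(M)+r_s(M)\big)$ with $r_s(M)=\frac{\sigma_s}{2}\|M-M_s\|^2$, $\sigma_1=\sigma\sqrt{h_1}$, $\sigma_t=\sigma(\sqrt{h_{1:t}}-\sqrt{h_{1:t-1}})$ for $t\ge2$, and $h_t=\max_{s\le t}g_s$. Policy regret: $\mathcal{R}_T=\sum_{t=1}^T c_t(\mathbf{x}_t,\mathbf{u}_t)-\sum_{t=1}^T c_t(\mathbf{x}_t(M_\star),\mathbf{u}_t(M_\star))$, where $M_\star\in\arg\min_{M\in\mathcal{M}}\sum_{t=1}^T f_t(M)$. *)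

(* Defs.v *)
From HB Require Import structures.
From mathcomp Require Import all_boot all_order all_algebra.
From mathcomp Require Import reals.
Set Implicit Arguments. Unset Strict Implicit. Unset Printing Implicit Defensive.
Import Order.TTheory GRing.Theory Num.Theory.
Local Open Scope ring_scope.

Section LDS.
Variable R : realType.

Definition frob (m n : nat) (X : 'M[R]_(m, n)) : R :=
  Num.sqrt (\sum_(i < m) \sum_(j < n) X i j ^+ 2).

Definition spectral_norm_eq (n : nat) (A : 'M[R]_n) (c : R) : Prop :=
  (forall x : 'cV[R]_n, frob (A *m x) <= c * frob x) /\
  (forall c', (forall x : 'cV[R]_n, frob (A *m x) <= c' * frob x) -> c <= c').

(* A DAC parameter M = [M^[1] | ... | M^[p]]; block M^[j] is stored at index j-1. *)
Definition param (p du dx : nat) := {ffun 'I_p -> 'M[R]_(du, dx)}.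

Definition pip (p du dx : nat) (M N : param p du dx) : R :=
  \sum_(k < p) \sum_(i < du) \sum_(j < dx) M k i j * N k i j.
Definition pnorm (p du dx : nat) (M : param p du dx) : R := Num.sqrt (pip M M).

Definition in_class (p du dx : nat) (kM : R) (M : param p du dx) : Prop :=
  \sum_(k < p) frob (M k) <= kM.

(* u_t = sum_{j=1}^p M^[j] w_{t-j}; with w_0 = 0 assumed, the truncated
   subtraction t - j = 0 for j >= t encodes w_s = 0 for s <= 0. *)
Definition dac (p du dx : nat) (M : param p du dx) (w : nat -> 'cV[R]_dx) (t : nat)
  : 'cV[R]_du := \sum_(k < p) M k *m w (t - k.+1)%N.

(* state n = x_{n+1}:  x_1 = 0,  x_{t+1} = A x_t + B u_t + w_t. *)
Fixpoint state (dx du : nat) (A : 'M[R]_dx) (B : 'M[R]_(dx, du))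
  (w : nat -> 'cV[R]_dx) (u : nat -> 'cV[R]_du) (n : nat) : 'cV[R]_dx :=
  match n with
  | 0 => 0
  | n'.+1 => A *m state A B w u n' + B *m u n'.+1 + w n'.+1
  end.

Definition xst (dx du : nat) (A : 'M[R]_dx) (B : 'M[R]_(dx, du))
  (w : nat -> 'cV[R]_dx) (u : nat -> 'cV[R]_du) (t : nat) : 'cV[R]_dx :=
  state A B w u t.-1.

Definition fcost (p dx du : nat) (A : 'M[R]_dx) (B : 'M[R]_(dx, du))
  (w : nat -> 'cV[R]_dx) (c : nat -> 'cV[R]_dx -> 'cV[R]_du -> R)
  (t : nat) (M : param p du dx) : R :=
  c t (xst A B w (dac M w) t) (dac M w t).

Definition acost (p dx du : nat) (A : 'M[R]_dx) (B : 'M[R]_(dx, du))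
  (w : nat -> 'cV[R]_dx) (c : nat -> 'cV[R]_dx -> 'cV[R]_du -> R)
  (Ms : nat -> param p du dx) (t : nat) : R :=
  let u := fun s => dac (Ms s) w s in c t (xst A B w u t) (u t).

Definition convex_cost (dx du : nat) (ct : 'cV[R]_dx -> 'cV[R]_du -> R) : Prop :=
  forall (x y : 'cV[R]_dx) (u v : 'cV[R]_du) (lam : R), 0 <= lam <= 1 ->
    ct (lam *: x + (1 - lam) *: y) (lam *: u + (1 - lam) *: v)
      <= lam * ct x u + (1 - lam) * ct y v.

Definition lipschitz_cost (dx du : nat) (l : R) (ct : 'cV[R]_dx -> 'cV[R]_du -> R)
  : Prop :=
  forall (x y : 'cV[R]_dx) (u v : 'cV[R]_du),
    `|ct x u - ct y v| <= l * Num.sqrt (frob (x - y) ^+ 2 + frob (u - v) ^+ 2).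

Definition subgrad (p du dx : nat) (f : param p du dx -> R) (M G : param p du dx)
  : Prop := forall N, f M + pip G (N - M) <= f N.

Definition gg (p du dx : nat) (G : nat -> param p du dx) (t : nat) : R :=
  Num.max (pnorm (G t)) (pnorm (G t) ^+ 2).

(* h_t = max_{1 <= s <= t} g_s  (the g_s are >= 0) *)
Definition hh (p du dx : nat) (G : nat -> param p du dx) (t : nat) : R :=
  \big[Num.max/0]_(1 <= s < t.+1) gg G s.

Definition hsum (p du dx : nat) (G : nat -> param p du dx) (t : nat) : R :=
  \sum_(1 <= s < t.+1) hh G s.

Definition sig (p du dx : nat) (sigma : R) (G : nat -> param p du dx) (t : nat) : R :=
  if t == 1%N then sigma * Num.sqrt (hh G 1)
  else sigma * (Num.sqrt (hsum G t) - Num.sqrt (hsum G t.-1)).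

Definition ftrl_obj (p du dx : nat) (f : nat -> param p du dx -> R) (sigma : R)
  (G : nat -> param p du dx) (Ms : nat -> param p du dx) (t : nat)
  (M : param p du dx) : R :=
  \sum_(1 <= s < t.+1) (f s M + sig sigma G s / 2 * pnorm (M - Ms s) ^+ 2).

End LDS.

(* Main.v *)
Require Import Defs.
From HB Require Import structures.
From mathcomp Require Import all_boot all_order all_algebra.
From mathcomp Require Import reals ring lra.
Import Order.TTheory GRing.Theory Num.Theory.
Set Implicit Arguments. Unset Strict Implicit. Unset Printing Implicit Defensive.
Local Open Scope ring_scope.

Section Norms.
Variable R : realType.

Definition nrm (I : finType) (a : I -> R) := Num.sqrt (\sum_i a i ^+ 2).

Lemma sumsq_ge0 (I : finType) (a : I -> R) : 0 <= \sum_i a i ^+ 2.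
Proof. by apply: sumr_ge0 => i _; exact: sqr_ge0. Qed.

Lemma sumsq_eq0 (I : finType) (a : I -> R) : \sum_i a i ^+ 2 = 0 -> forall i, a i = 0.
Proof.
move=> h i; have := psumr_eq0P (fun i _ => sqr_ge0 (a i)) h (i := i) isT.
by move/eqP; rewrite sqrf_eq0 => /eqP.
Qed.

Lemma CS (I : finType) (a b : I -> R) :
  \sum_i a i * b i <= nrm a * nrm b.
Proof.
rewrite /nrm.
have A0 := sumsq_ge0 a; have B0 := sumsq_ge0 b.
set A := \sum_i a i ^+ 2 in A0 *; set B := \sum_i b i ^+ 2 in B0 *.
have [Az|Ap] := eqVneq (Num.sqrt A) 0.
  have hA : A = 0 by rewrite -(sqr_sqrtr A0) Az expr0n.
  rewrite big1 ?Az ?mul0r // => i _; by rewrite (sumsq_eq0 hA) mul0r.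
have [Bz|Bp] := eqVneq (Num.sqrt B) 0.
  have hB : B = 0 by rewrite -(sqr_sqrtr B0) Bz expr0n.
  rewrite big1 ?Bz ?mulr0 // => i _; by rewrite (sumsq_eq0 hB) mulr0.
set al := Num.sqrt A in Ap *; set be := Num.sqrt B in Bp *.
have alp : 0 < al by rewrite lt_def Ap sqrtr_ge0.
have bep : 0 < be by rewrite lt_def Bp sqrtr_ge0.
apply: (@le_trans _ _ (\sum_i (be / (2 * al) * a i ^+ 2 + al / (2 * be) * b i ^+ 2))).
  apply: ler_sum => i _.
  have -> : be / (2 * al) * a i ^+ 2 + al / (2 * be) * b i ^+ 2
     = a i * b i + (be * a i - al * b i) ^+ 2 / (2 * al * be).
    by field; rewrite ?gt_eqF.
  rewrite lerDl; apply: divr_ge0; first exact: sqr_ge0.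
  by rewrite !mulr_ge0 // ltW.
rewrite big_split /= -!mulr_sumr -/A -/B.
rewrite -(sqr_sqrtr A0) -(sqr_sqrtr B0) -/al -/be.
rewrite le_eqVlt; apply/orP; left; apply/eqP; field; by rewrite ?gt_eqF.
Qed.

Lemma CS2 (I : finType) (a b : I -> R) :
  (\sum_i a i * b i) ^+ 2 <= (\sum_i a i ^+ 2) * (\sum_i b i ^+ 2).
Proof.
have h1 := CS a b.
have h2 := CS (fun i => - a i) b.
have e1 : \sum_i - a i * b i = - \sum_i a i * b i.
  by rewrite -sumrN; apply: eq_bigr => i _; rewrite mulNr.
have e2 : nrm (fun i => - a i) = nrm a.
  by rewrite /nrm; congr Num.sqrt; apply: eq_bigr => i _; rewrite sqrrN.
rewrite e1 e2 in h2.
rewrite -(sqr_sqrtr (sumsq_ge0 a)) -(sqr_sqrtr (sumsq_ge0 b)) -exprMn.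
rewrite -/(nrm a) -/(nrm b). nra.
Qed.

Lemma nrm_ext (I : finType) (a b : I -> R) : (forall i, a i = b i) -> nrm a = nrm b.
Proof. by move=> h; rewrite /nrm; congr Num.sqrt; apply: eq_bigr => i _; rewrite h. Qed.

Lemma nrm_ge0 (I : finType) (a : I -> R) : 0 <= nrm a.
Proof. exact: sqrtr_ge0. Qed.

Lemma nrmD (I : finType) (a b : I -> R) :
  nrm (fun i => a i + b i) <= nrm a + nrm b.
Proof.
have h := CS a b.
have ha := nrm_ge0 a; have hb := nrm_ge0 b.
rewrite {1}/nrm -(ger0_norm (addr_ge0 ha hb)) -sqrtr_sqr ler_wsqrtr //.
have -> : \sum_i (a i + b i) ^+ 2 = \sum_i a i ^+ 2 + 2 * \sum_i a i * b i + \sum_i b i ^+ 2.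
  rewrite mulr_sumr -!big_split /=; apply: eq_bigr => i _; ring.
rewrite -(sqr_sqrtr (sumsq_ge0 a)) -(sqr_sqrtr (sumsq_ge0 b)) -/(nrm a) -/(nrm b).
nra.
Qed.

Lemma nrmZ (I : finType) (k : R) (a : I -> R) :
  nrm (fun i => k * a i) = `|k| * nrm a.
Proof.
rewrite /nrm.
have -> : \sum_i (k * a i) ^+ 2 = k ^+ 2 * \sum_i a i ^+ 2.
  by rewrite mulr_sumr; apply: eq_bigr => i _; rewrite exprMn.
by rewrite sqrtrM ?sqr_ge0 // sqrtr_sqr.
Qed.

Lemma frob_nrm m n (X : 'M[R]_(m, n)) :
  frob X = nrm (fun q : 'I_m * 'I_n => X q.1 q.2).
Proof. by rewrite /frob /nrm pair_bigA. Qed.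

Lemma frob_ge0 m n (X : 'M[R]_(m, n)) : 0 <= frob X.
Proof. exact: sqrtr_ge0. Qed.

Lemma frob0 m n : frob (0 : 'M[R]_(m, n)) = 0.
Proof.
rewrite /frob big1 ?sqrtr0 // => i _; rewrite big1 // => j _.
by rewrite mxE expr0n.
Qed.

Lemma frobD m n (X Y : 'M[R]_(m, n)) : frob (X + Y) <= frob X + frob Y.
Proof.
rewrite !frob_nrm.
rewrite (@nrm_ext _ _ (fun q => X q.1 q.2 + Y q.1 q.2)); last by move=> q; rewrite mxE.
exact: nrmD.
Qed.

Lemma frobZ m n (k : R) (X : 'M[R]_(m, n)) : frob (k *: X) = `|k| * frob X.
Proof.
rewrite !frob_nrm -nrmZ; apply: nrm_ext => q; by rewrite mxE.
Qed.

Lemma frobN m n (X : 'M[R]_(m, n)) : frob (- X) = frob X.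
Proof. by rewrite -scaleN1r frobZ normrN normr1 mul1r. Qed.

Lemma frobB m n (X Y : 'M[R]_(m, n)) : frob (X - Y) <= frob X + frob Y.
Proof. by rewrite -(frobN Y) frobD. Qed.

Lemma frob_conv m n (lam : R) (X Y : 'M[R]_(m, n)) : 0 <= lam <= 1 ->
  frob (lam *: Y + (1 - lam) *: X) <= lam * frob Y + (1 - lam) * frob X.
Proof.
move=> /andP[l0 l1].
apply: le_trans (frobD _ _) _.
rewrite !frobZ ger0_norm // ger0_norm // subr_ge0 //.
Qed.

Lemma frob_sum m n (I : Type) (r : seq I) (P : pred I) (F : I -> 'M[R]_(m, n)) :
  frob (\sum_(i <- r | P i) F i) <= \sum_(i <- r | P i) frob (F i).
Proof.
elim/big_rec2: _ => [|i y1 y2 _ h]; first by rewrite frob0.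
by apply: le_trans (frobD _ _) _; rewrite lerD2l.
Qed.

Lemma frobM m n k (X : 'M[R]_(m, n)) (Y : 'M[R]_(n, k)) :
  frob (X *m Y) <= frob X * frob Y.
Proof.
rewrite /frob -sqrtrM; last by apply: sumr_ge0 => i _; exact: sumsq_ge0.
apply: ler_wsqrtr.
apply: (@le_trans _ _ (\sum_i \sum_j ((\sum_l X i l ^+ 2) * (\sum_l Y l j ^+ 2)))).
  apply: ler_sum => i _; apply: ler_sum => j _; rewrite mxE; exact: CS2.
rewrite big_distrl /=; apply: ler_sum => i _.
rewrite -mulr_sumr exchange_big /=.
by [].
Qed.

Lemma frob_eq0 m n (X : 'M[R]_(m, n)) : frob X = 0 -> X = 0.
Proof.
rewrite frob_nrm /nrm => /eqP; rewrite sqrtr_eq0 => h.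
have h0 : \sum_(q : 'I_m * 'I_n) X q.1 q.2 ^+ 2 = 0.
  by apply/eqP; rewrite eq_le h sumsq_ge0.
apply/matrixP => i j; rewrite mxE.
exact: (sumsq_eq0 h0 (i, j)).
Qed.

End Norms.
Section Params.
Variables (R : realType) (p du dx : nat).
Local Notation P := (param R p du dx).

Definition S3 (F : 'I_p -> 'I_du -> 'I_dx -> R) := \sum_k \sum_i \sum_j F k i j.

Lemma S3_le F G : (forall k i j, F k i j <= G k i j) -> S3 F <= S3 G.
Proof. move=> h; do 3 (apply: ler_sum => ? _); exact: h. Qed.

Lemma S3_eq F G : (forall k i j, F k i j = G k i j) -> S3 F = S3 G.
Proof. move=> h; do 3 (apply: eq_bigr => ? _); exact: h. Qed.

Lemma S3D F G : S3 (fun k i j => F k i j + G k i j) = S3 F + S3 G.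
Proof. rewrite /S3 -big_split; do 1 (apply: eq_bigr => ? _); rewrite -big_split;
  apply: eq_bigr => ? _; by rewrite -big_split. Qed.

Lemma S3Z a F : S3 (fun k i j => a * F k i j) = a * S3 F.
Proof. rewrite /S3 mulr_sumr; apply: eq_bigr => ? _; rewrite mulr_sumr;
  apply: eq_bigr => ? _; by rewrite mulr_sumr. Qed.

Lemma pipE (M N : P) : pip M N = S3 (fun k i j => M k i j * N k i j).
Proof. by []. Qed.

Lemma pip_ge0 (M : P) : 0 <= pip M M.
Proof. by rewrite pipE /S3; do 3 (apply: sumr_ge0 => ? _); rewrite -expr2 sqr_ge0. Qed.

Lemma pnorm_sq (M : P) : pnorm M ^+ 2 = pip M M.
Proof. by rewrite sqr_sqrtr // pip_ge0. Qed.

Lemma pnorm_ge0 (M : P) : 0 <= pnorm M.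
Proof. exact: sqrtr_ge0. Qed.

Lemma quad_id (lam : R) (x y c : P) :
  pip (lam *: y + (1 - lam) *: x - c) (lam *: y + (1 - lam) *: x - c)
  = lam * pip (y - c) (y - c) + (1 - lam) * pip (x - c) (x - c)
    - lam * (1 - lam) * pip (y - x) (y - x).
Proof.
rewrite !pipE -!S3Z -[- S3 _]mulN1r -S3Z -!S3D; apply: S3_eq => k i j.
rewrite !ffunE !mxE; ring.
Qed.

Lemma pip_sq_le (s : R) (G D : P) : 0 < s ->
  pip G D <= s / 2 * pip D D + pip G G / (2 * s).
Proof.
move=> sp; rewrite !pipE [X in _ + X]mulrC -!S3Z -S3D; apply: S3_le => k i j.
set g := G k i j; set d := D k i j.
have -> : s / 2 * (d * d) + (2 * s)^-1 * (g * g) = g * d + (s * d - g) ^+ 2 / (2 * s).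
  by field; rewrite gt_eqF.
by rewrite lerDl divr_ge0 ?sqr_ge0 // mulr_ge0 // ltW.
Qed.

Lemma pipBN (G M N : P) : pip G (N - M) = - pip G (M - N).
Proof. rewrite !pipE -mulN1r -S3Z; apply: S3_eq => k i j; rewrite !ffunE !mxE; ring. Qed.

Lemma pipBC (M N : P) : pip (M - N) (M - N) = pip (N - M) (N - M).
Proof. rewrite !pipE; apply: S3_eq => k i j; rewrite !ffunE !mxE; ring. Qed.

Lemma pnormBC (M N : P) : pnorm (M - N) = pnorm (N - M).
Proof. by rewrite /pnorm pipBC. Qed.

Lemma pip00 : pip (0 : P) 0 = 0.
Proof. rewrite pipE /S3; do 3 (rewrite big1 // => ? _); by rewrite !ffunE !mxE mulr0. Qed.

Definition nu (M : P) := \sum_k frob (M k).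

Lemma nu_ge0 (M : P) : 0 <= nu M.
Proof. by apply: sumr_ge0 => k _; exact: frob_ge0. Qed.

Lemma frob_le_pnorm (M : P) k : frob (M k) <= pnorm M.
Proof.
rewrite /frob /pnorm ler_wsqrtr // pipE /S3 (bigD1 k) //=.
apply: (@le_trans _ _ (\sum_i \sum_j M k i j * M k i j)).
  by apply: ler_sum => i _; apply: ler_sum => j _; rewrite expr2.
by rewrite lerDl; do 3 (apply: sumr_ge0 => ? _); rewrite -expr2 sqr_ge0.
Qed.

Lemma nu_le_pnorm (M : P) : nu M <= p%:R * Num.sqrt du%:R * pnorm M.
Proof.
have [du0|dup] := eqVneq du 0%N.
  rewrite /nu big1 ?mulr_ge0 ?pnorm_ge0 ?sqrtr_ge0 // => k _.
  rewrite /frob big1 ?sqrtr0 // => i _.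
  by have := ltn_ord i; rewrite {2}du0.
apply: (@le_trans _ _ (\sum_(k < p) pnorm M)).
  by apply: ler_sum => k _; exact: frob_le_pnorm.
rewrite sumr_const card_ord -mulrA mulr_natl; apply: ler_wMn2r.
rewrite ler_peMl ?pnorm_ge0 //.
have h1 : (1:R) <= du%:R by rewrite ler1n lt0n.
by rewrite -[X in X <= _]sqrtr1 ler_wsqrtr.
Qed.

Lemma sumsq_le (I : Type) (r : seq I) (F : I -> R) : (forall i, 0 <= F i) ->
  \sum_(i <- r) F i ^+ 2 <= (\sum_(i <- r) F i) ^+ 2.
Proof.
move=> h.
have : 0 <= \sum_(i <- r) F i /\ \sum_(i <- r) F i ^+ 2 <= (\sum_(i <- r) F i) ^+ 2.
  elim/big_rec2: _ => [|i y1 y2 _ [h1 h2]]; first by rewrite expr0n lexx.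
  have := h i; split; first by rewrite addr_ge0.
  nra.
by case.
Qed.

Lemma pnorm_le_nu (M : P) : pnorm M <= nu M.
Proof.
rewrite -(ger0_norm (nu_ge0 M)) -sqrtr_sqr /pnorm ler_wsqrtr //.
apply: le_trans (sumsq_le _ _); last by move=> k; exact: frob_ge0.
apply: ler_sum => k _; rewrite sqr_sqrtr; last by apply: sumr_ge0 => i _; exact: sumsq_ge0.
by apply: ler_sum => i _; apply: ler_sum => j _; rewrite expr2.
Qed.

Lemma nuB (M N : P) : nu (M - N) <= nu M + nu N.
Proof. rewrite /nu -big_split; apply: ler_sum => k _; rewrite !ffunE; exact: frobB. Qed.

Lemma nuD3 (M N L : P) : nu (M - L) <= nu (M - N) + nu (N - L).
Proof.
rewrite /nu -big_split; apply: ler_sum => k _; rewrite !ffunE.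
have -> : M k - L k = (M k - N k) + (N k - L k) by rewrite addrA subrK.
exact: frobD.
Qed.

Lemma class_conv (kM lam : R) (x y : P) : 0 <= lam <= 1 ->
  in_class kM x -> in_class kM y -> in_class kM (lam *: y + (1 - lam) *: x).
Proof.
move=> hl hx hy; rewrite /in_class.
apply: (@le_trans _ _ (lam * \sum_k frob (y k) + (1 - lam) * \sum_k frob (x k))).
  rewrite !mulr_sumr -big_split; apply: ler_sum => k _; rewrite !ffunE.
  exact: frob_conv.
move: hl => /andP[l0 l1]; move: hx hy; rewrite /in_class => hx hy.
have l1' : 0 <= 1 - lam by rewrite subr_ge0.
nra.
Qed.

Lemma class0 (M : P) : in_class 0 M -> M = 0.
Proof.
rewrite /in_class => h.
have h0 : \sum_k frob (M k) = 0 by apply/eqP; rewrite eq_le h sumr_ge0 // => k _; exact: frob_ge0.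
apply/ffunP => k; rewrite ffunE; apply: frob_eq0.
exact: (psumr_eq0P (fun k _ => frob_ge0 (M k)) h0 (i := k) isT).
Qed.

End Params.

Section SC.
Variables (R : realType) (p du dx : nat).
Local Notation P := (param R p du dx).

Definition sconv (Phi : P -> R) (S : R) :=
  forall (x y : P) (lam : R), 0 <= lam <= 1 ->
    Phi (lam *: y + (1 - lam) *: x) <= lam * Phi y + (1 - lam) * Phi x
      - lam * (1 - lam) * (S / 2) * pip (y - x) (y - x).

Lemma sconv_ext Phi Psi S : (forall M, Phi M = Psi M) -> sconv Psi S -> sconv Phi S.
Proof. by move=> e h x y lam hl; rewrite !e; exact: h. Qed.

Lemma sconv_add Phi Psi S1 S2 : sconv Phi S1 -> sconv Psi S2 ->
  sconv (fun M => Phi M + Psi M) (S1 + S2).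
Proof.
move=> h1 h2 x y lam hl; have := h1 x y lam hl; have := h2 x y lam hl.
rewrite /=; lra.
Qed.

Lemma sconv_zero : sconv (fun _ => 0) 0.
Proof. move=> x y lam hl; rewrite /=; lra. Qed.

Lemma sconv_quad (s : R) (c : P) : sconv (fun M => s / 2 * pnorm (M - c) ^+ 2) s.
Proof. move=> x y lam hl; rewrite /= !pnorm_sq quad_id; lra. Qed.

Lemma SCmin (K : P -> Prop) Phi S (x y : P) :
  (forall x y lam, 0 <= lam <= 1 -> K x -> K y -> K (lam *: y + (1 - lam) *: x)) ->
  sconv Phi S -> 0 <= S -> K x -> (forall y, K y -> Phi x <= Phi y) -> K y ->
  Phi x + S / 2 * pip (y - x) (y - x) <= Phi y.
Proof.
move=> Kc hs S0 Kx hmin Ky.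
set a := S / 2 * pip (y - x) (y - x).
have a0 : 0 <= a by rewrite mulr_ge0 ?divr_ge0 ?pip_ge0.
have b0 : 0 <= Phi y - Phi x by rewrite subr_ge0 hmin.
have key : forall lam, 0 < lam <= 1 -> (1 - lam) * a <= Phi y - Phi x.
  move=> lam /andP[l0 l1].
  have hl : 0 <= lam <= 1 by rewrite ltW.
  have h1 := hs x y lam hl.
  have h2 := hmin _ (Kc x y lam hl Kx Ky).
  have h3 : lam * ((1 - lam) * a) <= lam * (Phi y - Phi x).
    rewrite /a; lra.
  by rewrite ler_pM2l in h3.
suff : a <= Phi y - Phi x by lra.
case: (leP a (Phi y - Phi x)) => // hlt.
exfalso.
move: b0 hlt key; set b := Phi y - Phi x => b0 hlt key.
have ap : 0 < a by apply: le_lt_trans hlt.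
have hl0 : 0 < (a - b) / (2 * a) by rewrite divr_gt0 // ?subr_gt0 // mulr_gt0.
have hl1 : (a - b) / (2 * a) <= 1.
  rewrite ler_pdivrMr; [lra | by rewrite mulr_gt0].
have hl : 0 < (a - b) / (2 * a) <= 1 by rewrite hl0 hl1.
have := key _ hl.
have -> : (1 - (a - b) / (2 * a)) * a = (a + b) / 2 by field; rewrite gt_eqF.
lra.
Qed.

Variable G : nat -> P.

Lemma gg_ge0 t : 0 <= gg G t.
Proof. by rewrite /gg le_max pnorm_ge0. Qed.

Lemma pnorm_le_gg t : pnorm (G t) <= gg G t.
Proof. by rewrite /gg le_max lexx. Qed.

Lemma pip_le_gg t : pip (G t) (G t) <= gg G t.
Proof. by rewrite /gg -pnorm_sq le_max lexx orbT. Qed.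

Lemma hh_ge0 t : 0 <= hh G t.
Proof.
rewrite /hh; elim/big_ind: _ => //; last by move=> i _; exact: gg_ge0.
by move=> a b ha hb; rewrite le_max ha.
Qed.

Lemma gg_le_hh t : (1 <= t)%N -> gg G t <= hh G t.
Proof.
move=> t1; rewrite /hh.
have : t \in index_iota 1 t.+1 by rewrite mem_index_iota t1 ltnSn.
elim: (index_iota 1 t.+1) => // a r IH; rewrite inE big_cons => /orP[/eqP <-|/IH h].
  by rewrite le_max lexx.
by rewrite le_max h orbT.
Qed.

Lemma hsum0 : hsum G 0 = 0.
Proof. by rewrite /hsum big_geq. Qed.

Lemma hsumS t : hsum G t.+1 = hsum G t + hh G t.+1.
Proof. by rewrite /hsum big_nat_recr. Qed.

Lemma hsum_ge0 t : 0 <= hsum G t.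
Proof. by apply: sumr_ge0 => i _; exact: hh_ge0. Qed.

Lemma hsum_ge_h1 t : (1 <= t)%N -> hh G 1 <= hsum G t.
Proof.
elim: t => // t IH _; rewrite hsumS.
case: t IH => [_|t IH]; first by rewrite hsum0 add0r.
by apply: le_trans (IH isT) _; rewrite lerDl hh_ge0.
Qed.

Lemma hsum_mono t : hsum G t <= hsum G t.+1.
Proof. by rewrite hsumS lerDl hh_ge0. Qed.

Lemma sum_sqrt_bound T : 0 < hh G 1 ->
  \sum_(1 <= t < T.+1) hh G t / Num.sqrt (hsum G t) <= 2 * Num.sqrt (hsum G T).
Proof.
move=> h1; elim: T => [|T IH].
  by rewrite big_geq // hsum0 sqrtr0 mulr0.
rewrite big_nat_recr //=.
have Hp : 0 < hsum G T.+1 by apply: lt_le_trans h1 (hsum_ge_h1 _).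
have bp : 0 < Num.sqrt (hsum G T.+1) by rewrite sqrtr_gt0.
have a0 : 0 <= Num.sqrt (hsum G T) := sqrtr_ge0 _.
have e : hh G T.+1 = Num.sqrt (hsum G T.+1) ^+ 2 - Num.sqrt (hsum G T) ^+ 2.
  by rewrite !sqr_sqrtr ?hsum_ge0 // hsumS addrC addKr.
suff : hh G T.+1 / Num.sqrt (hsum G T.+1) <= 2 * (Num.sqrt (hsum G T.+1) - Num.sqrt (hsum G T)) by lra.
rewrite ler_pdivrMr // e.
set a := Num.sqrt (hsum G T) in a0 *; set b := Num.sqrt (hsum G T.+1) in bp *.
have h := sqr_ge0 (b - a); rewrite sqrrB in h. rewrite !expr2 in h *. lra.
Qed.

Variable sigma : R.

Lemma sigE s : (1 <= s)%N ->
  sig sigma G s = sigma * (Num.sqrt (hsum G s) - Num.sqrt (hsum G s.-1)).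
Proof.
rewrite /sig; case: eqP => [->|//] _.
by rewrite /= hsumS hsum0 add0r sqrtr0 subr0.
Qed.

Lemma sig_ge0 s : 0 <= sigma -> (1 <= s)%N -> 0 <= sig sigma G s.
Proof.
move=> s0 s1; rewrite sigE // mulr_ge0 // subr_ge0 ler_wsqrtr //.
by case: s s1 => // s _; exact: hsum_mono.
Qed.

Lemma sum_sig t : \sum_(1 <= s < t.+1) sig sigma G s = sigma * Num.sqrt (hsum G t).
Proof.
elim: t => [|t IH]; first by rewrite big_geq // hsum0 sqrtr0 mulr0.
by rewrite big_nat_recr //= IH sigE //= mulrBr addrC subrK.
Qed.

End SC.

Section Dyn.
Variables (R : realType) (dx du p : nat).
Variables (A : 'M[R]_dx) (B : 'M[R]_(dx, du)) (w : nat -> 'cV[R]_dx).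
Local Notation P := (param R p du dx).

Lemma dac_lin (a b : R) (M N : P) t :
  dac (a *: M + b *: N) w t = a *: dac M w t + b *: dac N w t.
Proof.
rewrite /dac !scaler_sumr -big_split; apply: eq_bigr => k _ /=.
by rewrite !ffunE mulmxDl -!scalemxAl.
Qed.

Lemma dacB (M N : P) t : dac (M - N) w t = dac M w t - dac N w t.
Proof.
rewrite /dac -sumrB; apply: eq_bigr => k _ /=.
by rewrite !ffunE mulmxBl.
Qed.

Lemma state_ext (u u' : nat -> 'cV[R]_du) :
  (forall s, (1 <= s)%N -> u s = u' s) -> forall n, state A B w u n = state A B w u' n.
Proof. by move=> h; elim=> [//|n IH] /=; rewrite IH h. Qed.

Lemma state_lin (a b : R) (u u1 u2 : nat -> 'cV[R]_du) : a + b = 1 ->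
  (forall s, (1 <= s)%N -> u s = a *: u1 s + b *: u2 s) ->
  forall n, state A B w u n = a *: state A B w u1 n + b *: state A B w u2 n.
Proof.
move=> hab h; elim=> [|n IH] /=; first by rewrite !scaler0 addr0.
rewrite IH h // mulmxDr mulmxDr -!scalemxAr !scalerDr.
rewrite -{1}[w n.+1]scale1r -hab scalerDl.
by rewrite (addrACA (a *: (A *m state A B w u1 n))) (addrACA (a *: (A *m state A B w u1 n) + _)).
Qed.

Lemma state_diff (u u' : nat -> 'cV[R]_du) n :
  state A B w u n.+1 - state A B w u' n.+1
  = A *m (state A B w u n - state A B w u' n) + B *m (u n.+1 - u' n.+1).
Proof.
rewrite /= mulmxBr mulmxBr.
by rewrite opprD addrACA subrr addr0 opprD addrACA.
Qed.

Lemma frob_dac (wb : R) (M : P) s : (forall t, frob (w t) <= wb) ->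
  frob (dac M w s) <= wb * nu M.
Proof.
move=> hw; rewrite /dac /nu mulr_sumr.
apply: le_trans (frob_sum _ _ _) _; apply: ler_sum => k _.
apply: le_trans (frobM _ _) _.
by rewrite mulrC ler_wpM2r ?frob_ge0.
Qed.

Variable c : nat -> 'cV[R]_dx -> 'cV[R]_du -> R.

Lemma fcost_sconv t : convex_cost (c t) -> sconv (fcost A B w c t : P -> R) 0.
Proof.
move=> hc x y lam hl.
rewrite /fcost /xst.
have hab : lam + (1 - lam) = 1 by rewrite addrC subrK.
have e1 := @state_lin lam (1 - lam) (dac (lam *: y + (1 - lam) *: x) w)
   (dac y w) (dac x w) hab (fun s _ => dac_lin _ _ _ _ _).
rewrite e1 dac_lin.
rewrite mul0r mulr0 mul0r subr0.
exact: hc.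
Qed.

End Dyn.

Section Mis.
Variables (R : realType) (dx du p : nat).
Variables (A : 'M[R]_dx) (B : 'M[R]_(dx, du)) (w : nat -> 'cV[R]_dx).
Variable (Ms : nat -> param R p du dx).
Variables (rho delta : R).

Definition dd k := pnorm (Ms k - Ms k.+1).
Definition Dsum m := \sum_(0 <= k < m) dd k.
Fixpoint Wf (t n : nat) : R :=
  match n with 0 => 0 | n'.+1 => rho * Wf t n' + (Dsum t - Dsum n'.+1) end.
Fixpoint gf (n : nat) : R := match n with 0 => 0 | n'.+1 => rho * gf n' + 1 end.
Definition Yf t := Wf t t.-1.

Lemma dd_ge0 k : 0 <= dd k.
Proof. exact: pnorm_ge0. Qed.

Lemma DsumS m : Dsum m.+1 = Dsum m + dd m.
Proof. by rewrite /Dsum big_nat_recr. Qed.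

Lemma Dsum_mono m t : (m <= t)%N -> Dsum m <= Dsum t.
Proof.
move=> h; rewrite -(subnK h); elim: (t - m)%N => [|j IH]; first by rewrite add0n.
by rewrite addSn DsumS; apply: le_trans IH _; rewrite lerDl dd_ge0.
Qed.

Lemma nu0 : nu (0 : param R p du dx) = 0.
Proof. by rewrite /nu big1 // => k _; rewrite ffunE frob0. Qed.

Lemma chain n t : (n <= t)%N ->
  nu (Ms n - Ms t) <= p%:R * Num.sqrt du%:R * (Dsum t - Dsum n).
Proof.
move=> h; rewrite -(subnK h); elim: (t - n)%N => [|j IH].
  by rewrite add0n subrr nu0 subrr mulr0.
rewrite addSn; apply: le_trans (nuD3 _ (Ms (j + n)%N) _) _.
have := nu_le_pnorm (Ms (j + n)%N - Ms (j + n).+1).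
rewrite DsumS -/(dd _); move: IH; lra.
Qed.

Lemma W_shift t n : Wf t.+1 n = Wf t n + gf n * dd t.
Proof. elim: n => [|n IH] /=; first by rewrite mul0r addr0. rewrite IH DsumS; ring. Qed.

Hypothesis hrho : 0 <= rho.
Hypothesis hrd : rho + delta = 1.
Hypothesis hd : 0 < delta.

Lemma gf_ge0 n : 0 <= gf n.
Proof. elim: n => //= n IH; by rewrite addr_ge0 ?mulr_ge0. Qed.

Lemma gf_le n : gf n <= delta^-1.
Proof.
elim: n => /= [|n IH]; first by rewrite invr_ge0 ltW.
have : rho * gf n <= rho * delta^-1 by rewrite ler_wpM2l.
have -> : rho * delta^-1 = delta^-1 - 1.
  have er : rho = 1 - delta by rewrite -hrd addrK.
  by rewrite er; field; rewrite gt_eqF.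
lra.
Qed.

Lemma W_ge0 t n : (n <= t)%N -> 0 <= Wf t n.
Proof.
elim: n => //= n IH h; rewrite addr_ge0 ?mulr_ge0 ?IH ?subr_ge0 ?Dsum_mono //.
exact: ltnW.
Qed.

Lemma Y_step t : (1 <= t)%N -> Yf t.+1 <= rho * Yf t + dd t / delta.
Proof.
case: t => // t _; rewrite /Yf /= W_shift DsumS.
have h1 := gf_le t; have h2 := dd_ge0 t.+1.
have : rho * gf t * dd t.+1 <= rho * delta^-1 * dd t.+1.
  by rewrite ler_wpM2r // ler_wpM2l.
have -> : rho * delta^-1 = delta^-1 - 1.
  have er : rho = 1 - delta by rewrite -hrd addrK.
  by rewrite er; field; rewrite gt_eqF.
lra.
Qed.

Lemma Ysum T : (1 <= T)%N ->
  delta * \sum_(1 <= t < T.+1) Yf t + rho * Yf T <= (Dsum T - Dsum 1) / delta.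
Proof.
elim: T => // T IH _.
case: T IH => [_|T IH].
  by rewrite big_nat1 /Yf /= !mulr0 addr0 subrr mul0r.
rewrite big_nat_recr //= mulrDr.
have h := Y_step (t := T.+1) isT.
have h' := IH isT.
rewrite DsumS mulrDl.
have e : delta * Yf T.+2 + rho * Yf T.+2 = Yf T.+2 by rewrite -mulrDl addrC hrd mul1r.
move: h h' e; lra.
Qed.

Lemma Ysum_le T : (1 <= T)%N ->
  \sum_(1 <= t < T.+1) Yf t <= (Dsum T - Dsum 1) / delta ^+ 2.
Proof.
move=> hT; have h := Ysum hT.
have y0 : 0 <= rho * Yf T by rewrite mulr_ge0 // W_ge0 // leq_pred.
rewrite expr2 invfM mulrA ler_pdivlMr // mulrC.
lra.
Qed.

End Mis.

Section Mis2.
Variables (R : realType) (dx du p : nat).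
Variables (A : 'M[R]_dx) (B : 'M[R]_(dx, du)) (w : nat -> 'cV[R]_dx).
Variable (Ms : nat -> param R p du dx).
Variables (rho kB wb : R).
Hypothesis hA : forall x : 'cV[R]_dx, frob (A *m x) <= rho * frob x.
Hypothesis hB : frob B <= kB.
Hypothesis hw : forall t, frob (w t) <= wb.
Hypothesis hrho : 0 <= rho.

Local Notation zz := (p%:R * wb * Num.sqrt du%:R * kB).

Lemma zz_ge0 : 0 <= zz.
Proof.
have wb0 : 0 <= wb := le_trans (frob_ge0 (w 0)) (hw 0).
have kB0 : 0 <= kB := le_trans (frob_ge0 B) hB.
by rewrite !mulr_ge0 ?sqrtr_ge0 ?ler0n.
Qed.

Lemma err_bound t n : (n < t)%N ->
  frob (state A B w (fun s => dac (Ms s) w s) n - state A B w (dac (Ms t) w) n)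
   <= zz * Wf Ms rho t n.
Proof.
have wb0 : 0 <= wb := le_trans (frob_ge0 (w 0)) (hw 0).
have kB0 : 0 <= kB := le_trans (frob_ge0 B) hB.
elim: n => [|n IH] ht.
  by rewrite /= subrr frob0 mulr0.
rewrite state_diff.
apply: le_trans (frobD _ _) _.
have e1 := le_trans (hA _) (ler_wpM2l hrho (IH (ltnW ht))).
have e2 : frob (B *m (dac (Ms n.+1) w n.+1 - dac (Ms t) w n.+1))
    <= kB * (wb * (p%:R * Num.sqrt du%:R * (Dsum Ms t - Dsum Ms n.+1))).
  apply: le_trans (frobM _ _) _.
  apply: le_trans (ler_wpM2r (frob_ge0 _) hB) _.
  apply: (ler_wpM2l kB0).
  rewrite -dacB.
  apply: le_trans (frob_dac _ _ hw) _.
  apply: (ler_wpM2l wb0).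
  by apply: chain; exact: ltnW.
rewrite [Wf _ _ _ _]/=.
move: e1 e2 => /=; lra.
Qed.

Lemma mis_t (c : nat -> 'cV[R]_dx -> 'cV[R]_du -> R) (l : R) t :
  lipschitz_cost l (c t) -> 0 <= l -> (1 <= t)%N ->
  acost A B w c Ms t - fcost A B w c t (Ms t) <= l * zz * Yf Ms rho t.
Proof.
move=> hl l0 t1.
rewrite /acost /fcost /xst /Yf /=.
have h1 := hl (state A B w (fun s => dac (Ms s) w s) t.-1)
   (state A B w (dac (Ms t) w) t.-1) (dac (Ms t) w t) (dac (Ms t) w t).
have ht : (t.-1 < t)%N by rewrite ltn_predL.
have h2 := @err_bound t t.-1 ht.
apply: le_trans (ler_norm _) _.
apply: le_trans h1 _.
rewrite subrr frob0 expr0n addr0 sqrtr_sqr ger0_norm ?frob_ge0 //.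
by rewrite -mulrA; apply: ler_wpM2l.
Qed.

Lemma mis_sum (c : nat -> 'cV[R]_dx -> 'cV[R]_du -> R) (l delta : R) T :
  (forall t, lipschitz_cost l (c t)) -> 0 <= l -> rho + delta = 1 -> 0 < delta ->
  (1 <= T)%N ->
  \sum_(1 <= t < T.+1) (acost A B w c Ms t - fcost A B w c t (Ms t))
    <= l * zz * ((Dsum Ms T - Dsum Ms 1) / delta ^+ 2).
Proof.
move=> hl l0 hrd hd hT.
apply: (@le_trans _ _ (\sum_(1 <= t < T.+1) l * zz * Yf Ms rho t)).
  by apply: ler_sum_nat => t /andP[t1 _]; exact: mis_t.
rewrite -mulr_sumr; apply: ler_wpM2l; first by rewrite mulr_ge0 // zz_ge0.
exact: Ysum_le.
Qed.

End Mis2.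

Section FT.
Variables (R : realType) (p du dx : nat).
Local Notation P := (param R p du dx).
Variables (f : nat -> P -> R) (sigma : R) (G Ms : nat -> P).
Local Notation F := (ftrl_obj f sigma G Ms).

Lemma F0 M : F 0 M = 0.
Proof. by rewrite /ftrl_obj big_geq. Qed.

Lemma FS t M : F t.+1 M = F t M + (f t.+1 M + sig sigma G t.+1 / 2 * pnorm (M - Ms t.+1) ^+ 2).
Proof. by rewrite /ftrl_obj big_nat_recr. Qed.

Lemma pnorm0 : pnorm (0 : P) = 0.
Proof. by rewrite /pnorm pip00 sqrtr0. Qed.

Lemma Fsconv t : (forall s, sconv (f s) 0) ->
  sconv (F t) (sigma * Num.sqrt (hsum G t)).
Proof.
move=> hf; rewrite -sum_sig.
elim: t => [|t IH].
  rewrite big_geq //; apply: (sconv_ext (Psi := fun _ => 0)); first exact: F0.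
  exact: sconv_zero.
rewrite big_nat_recr //= -[sig sigma G t.+1]add0r.
apply: (sconv_ext (Psi := fun M => F t M + (f t.+1 M + sig sigma G t.+1 / 2 * pnorm (M - Ms t.+1) ^+ 2))).
  exact: FS.
apply: sconv_add => //; apply: sconv_add => //; exact: sconv_quad.
Qed.

Lemma F_tele T : \sum_(1 <= t < T.+1) f t (Ms t)
  = \sum_(1 <= t < T.+1) (F t (Ms t) - F t (Ms t.+1)) + F T (Ms T.+1).
Proof.
elim: T => [|T IH]; first by rewrite !big_geq // F0 addr0.
rewrite big_nat_recr //= IH [in X in _ = X]big_nat_recr //= FS subrr pnorm0 expr0n mulr0 addr0.
lra.
Qed.

Lemma ftrl_step t (K : P -> Prop) :
  (forall x y lam, 0 <= lam <= 1 -> K x -> K y -> K (lam *: y + (1 - lam) *: x)) ->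
  (forall s, sconv (f s) 0) ->
  0 < sigma -> 0 < hh G 1 -> (1 <= t)%N ->
  K (Ms t) -> K (Ms t.+1) ->
  (forall M, K M -> F t.-1 (Ms t) <= F t.-1 M) ->
  (forall M, K M -> F t (Ms t.+1) <= F t M) ->
  subgrad (f t) (Ms t) (G t) ->
  F t (Ms t) - F t (Ms t.+1) <= pip (G t) (G t) / (2 * (sigma * Num.sqrt (hsum G t)))
  /\ dd Ms t <= pnorm (G t) / (sigma * Num.sqrt (hsum G t)).
Proof.
move=> Kc hf sp h1 t1 Kt Kt1 minp minF sg.
case: t t1 Kt Kt1 minp minF sg => // t' _ Kt Kt1 minp minF sg.
set t := t'.+1 in Kt Kt1 minp minF sg *.
set S := sigma * Num.sqrt (hsum G t).
have Sp : 0 < S.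
  rewrite mulr_gt0 // sqrtr_gt0; apply: lt_le_trans h1 _; exact: hsum_ge_h1.
pose phi M := F t' M + sig sigma G t / 2 * pnorm (M - Ms t) ^+ 2.
have sphi : sconv phi S.
  rewrite /S -sum_sig big_nat_recr //= sum_sig.
  apply: sconv_add; [exact: Fsconv | exact: sconv_quad].
have sF : sconv (F t) S by exact: Fsconv.
have sig0 : 0 <= sig sigma G t by apply: sig_ge0 => //; exact: ltW.
have minphi : forall M, K M -> phi (Ms t) <= phi M.
  move=> M KM; rewrite /phi subrr pnorm0 expr0n mulr0 addr0.
  have := minp M KM; rewrite /= => h.
  by apply: le_trans h _; rewrite lerDl mulr_ge0 ?sqr_ge0 // divr_ge0.
have hphi := SCmin Kc sphi (ltW Sp) Kt minphi Kt1.
have hF := SCmin Kc sF (ltW Sp) Kt1 minF Kt.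
have eF : forall M, F t M = phi M + f t M.
  by move=> M; rewrite /phi FS; lra.
have hsq := pip_sq_le (G t) (Ms t - Ms t.+1) Sp.
move: sg => /(_ (Ms t.+1)) sg.
rewrite pipBN in sg.
rewrite pipBC in hphi.
rewrite !eF in hF *.
set Q := pip (Ms t - Ms t.+1) (Ms t - Ms t.+1) in hphi hF hsq.
set qG := pip (G t) (G t) in hsq *.
set g := pip (G t) (Ms t - Ms t.+1) in hsq sg.
have i1 : phi (Ms t) + f t (Ms t) - (phi (Ms t.+1) + f t (Ms t.+1)) <= qG / (2 * S) by lra.
split => //.
have h2 : S / 2 * Q <= qG / (2 * S) by lra.
have Q0 : 0 <= Q := pip_ge0 _.
have h3 : S ^+ 2 * Q <= qG.
  have := ler_wpM2l (ltW Sp) h2.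
  have -> : S * (qG / (2 * S)) = qG / 2 by field; rewrite gt_eqF.
  rewrite !expr2; lra.
have h4 : S * Num.sqrt Q <= pnorm (G t).
  rewrite -(ger0_norm (mulr_ge0 (ltW Sp) (sqrtr_ge0 Q))) -sqrtr_sqr /pnorm.
  by apply: ler_wsqrtr; rewrite exprMn sqr_sqrtr.
by rewrite /dd ler_pdivlMr // mulrC.
Qed.

End FT.

Section Final.
Variable R : realType.

Lemma final_alg (l z d k r s : R) : 0 < d -> 0 < k -> 0 < r -> 0 < s ->
  r ^+ 2 = 2 -> s ^+ 2 = d ^+ 2 + 2 * l * z ->
  2 * l * z / (d ^+ 2 * (s / (r * k * d))) + (s / (r * k * d))^-1
    + 2 * k ^+ 2 * (s / (r * k * d)) = 2 * k / d * (r * s).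
Proof.
move=> dp kp rp sp e2 es.
have ea : 2 * l * z = s ^+ 2 - d ^+ 2 by rewrite es addrC addKr.
rewrite ea -{1}e2.
field.
by rewrite !gt_eqF.
Qed.

End Final.
Theorem theorem1 (R : realType) (dx du p : nat) (hp : (0 < p)%N)
  (A : 'M[R]_dx) (B : 'M[R]_(dx, du)) (delta kB kM l wb : R)
  (w : nat -> 'cV[R]_dx) (c : nat -> 'cV[R]_dx -> 'cV[R]_du -> R)
  (Ms G : nat -> param R p du dx) (Mstar : param R p du dx) (T : nat) :
  0 < delta < 1 ->
  spectral_norm_eq A (1 - delta) ->
  frob B <= kB ->
  w 0%N = 0 ->
  (forall t, frob (w t) <= wb) ->
  (forall t, convex_cost (c t)) ->
  (forall t, lipschitz_cost l (c t)) ->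
  let f := fcost A B w c in
  let z := p%:R * wb * Num.sqrt du%:R * kB in
  let sigma := Num.sqrt (delta ^+ 2 + 2 * l * z) / (Num.sqrt 2 * kM * delta) in
  (* subgradients G_t of f_t at M_t *)
  (forall t, (1 <= t)%N -> subgrad (f t) (Ms t) (G t)) ->
  (* FTRL-C iterates *)
  in_class kM (Ms 1%N) ->
  (forall t, (1 <= t)%N ->
     in_class kM (Ms t.+1) /\
     forall M, in_class kM M ->
       ftrl_obj f sigma G Ms t (Ms t.+1) <= ftrl_obj f sigma G Ms t M) ->
  0 < hh G 1 ->
  (* M_star is a minimizer of sum_{t=1}^T f_t over the class *)
  in_class kM Mstar ->
  (forall M, in_class kM M ->
     \sum_(1 <= t < T.+1) f t Mstar <= \sum_(1 <= t < T.+1) f t M) ->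
  (1 <= T)%N ->
  \sum_(1 <= t < T.+1) acost A B w c Ms t - \sum_(1 <= t < T.+1) f t Mstar
  <= 2 * kM / delta
     * (Num.sqrt (2 * (delta ^+ 2 + 2 * l * z)) + l * z / (delta * Num.sqrt (hh G 1)))
     * Num.sqrt (\sum_(1 <= t < T.+1) hh G t).
Proof.
move=> /andP[d0 d1] [hA hAmin] hB hw0 hw hconv hlip f z sigma hsg hM1 hftrl h1pos hMs hMsmin hT.
set rho := 1 - delta.
have hrho : 0 <= rho by rewrite subr_ge0 ltW.
have hrd : rho + delta = 1 by rewrite subrK.
have wb0 : 0 <= wb := le_trans (frob_ge0 (w 0%N)) (hw 0%N).
have kB0 : 0 <= kB := le_trans (frob_ge0 B) hB.
have dxp : (0 < dx)%N.
  rewrite lt0n; apply/negP => /eqP dx0.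
  have h0 : forall x : 'cV[R]_dx, frob (A *m x) <= 0 * frob x.
    move=> x; rewrite mul0r /frob big1 ?sqrtr0 // => i _.
    by have := ltn_ord i; rewrite {2}dx0.
  have := hAmin 0 h0; lra.
have l0 : 0 <= l.
  pose x0 : 'cV[R]_dx := const_mx 1.
  have fx : 0 < frob x0.
    rewrite lt_def frob_ge0 andbT; apply/eqP => /frob_eq0 /matrixP /(_ (Ordinal dxp) ord0).
    by rewrite !mxE => /eqP; rewrite oner_eq0.
  have := hlip 0%N x0 0 0 0.
  rewrite !subr0 frob0 expr0n addr0 sqrtr_sqr (ger0_norm (frob_ge0 x0)) => h.
  have : 0 <= l * frob x0 := le_trans (normr_ge0 _) h.
  by rewrite pmulr_lge0.
have z0 : 0 <= z by rewrite /z !mulr_ge0 ?sqrtr_ge0 ?ler0n.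
have kM0 : 0 <= kM by apply: le_trans hM1; apply: sumr_ge0 => k _; exact: frob_ge0.
have Kt : forall t, (1 <= t)%N -> in_class kM (Ms t).
  by case=> // [[|t]] _ //; exact: (hftrl t.+1 isT).1.
have hmis := @mis_sum R dx du p A B w Ms rho kB wb hA hB hw hrho c l delta T hlip l0 hrd d0 hT.
rewrite -/z in hmis.
have eL : \sum_(1 <= t < T.+1) acost A B w c Ms t - \sum_(1 <= t < T.+1) f t Mstar
  = \sum_(1 <= t < T.+1) (acost A B w c Ms t - fcost A B w c t (Ms t))
    + (\sum_(1 <= t < T.+1) f t (Ms t) - \sum_(1 <= t < T.+1) f t Mstar).
  by rewrite sumrB /f; ring.
rewrite eL; clear eL.
have [kMe|kMn] := eqVneq kM 0.
  have M0 : forall t, (1 <= t)%N -> Ms t = 0.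
    by move=> t t1; apply: class0; rewrite -kMe; exact: Kt.
  have Mst0 : Mstar = 0 by apply: class0; rewrite -kMe.
  have eD : forall n, (1 <= n)%N -> Dsum Ms n = Dsum Ms 1.
    elim=> // n IH _; case: n IH => [//|n] IH.
    by rewrite DsumS IH // /dd M0 // M0 // subrr pnorm0 addr0.
  rewrite eD // subrr mul0r mulr0 in hmis.
  have ef : \sum_(1 <= t < T.+1) f t (Ms t) = \sum_(1 <= t < T.+1) f t Mstar.
    by apply: eq_big_nat => t /andP[t1 _]; rewrite M0 // Mst0.
  by rewrite ef subrr addr0 kMe mulr0 !mul0r.
have kMp : 0 < kM by rewrite lt_def kMn kM0.
have two2 : (0:R) < 2 by rewrite ltr0n.
set r2 := Num.sqrt (2 : R).
set S' := Num.sqrt (delta ^+ 2 + 2 * l * z).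
have r2p : 0 < r2 by rewrite sqrtr_gt0 ltr0n.
have e2 : r2 ^+ 2 = 2 by rewrite sqr_sqrtr // ler0n.
have Sarg : 0 < delta ^+ 2 + 2 * l * z.
  have : 0 < delta ^+ 2 by rewrite exprn_gt0.
  have : 0 <= 2 * l * z by apply: mulr_ge0 z0; apply: mulr_ge0 l0; exact: ler0n.
  lra.
have Sp : 0 < S' by rewrite sqrtr_gt0.
have eS : S' ^+ 2 = delta ^+ 2 + 2 * l * z by rewrite sqr_sqrtr // (ltW Sarg).
have sp : 0 < sigma by rewrite /sigma divr_gt0 // !mulr_gt0.
have Kc : forall (x y : param R p du dx) lam, 0 <= lam <= 1 -> in_class kM x -> in_class kM y ->
    in_class kM (lam *: y + (1 - lam) *: x).
  by move=> x y lam hl hx hy; exact: class_conv.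
have hf : forall s, sconv (f s) 0 by move=> s; exact: fcost_sconv.
have step : forall t, (1 <= t)%N ->
  ftrl_obj f sigma G Ms t (Ms t) - ftrl_obj f sigma G Ms t (Ms t.+1)
     <= pip (G t) (G t) / (2 * (sigma * Num.sqrt (hsum G t)))
  /\ dd Ms t <= pnorm (G t) / (sigma * Num.sqrt (hsum G t)).
  move=> t t1.
  apply: (ftrl_step Kc hf sp h1pos t1 (Kt t t1) (Kt t.+1 isT) _ ((hftrl t t1).2) (hsg t t1)).
  move=> M KM; case: t t1 => // [[|t]] _ /=; first by rewrite !F0.
  exact: (hftrl t.+1 isT).2.
set sH := Num.sqrt (hsum G T).
have sH0 : 0 <= sH := sqrtr_ge0 _.
have Hp : forall t, (1 <= t)%N -> 0 < Num.sqrt (hsum G t).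
  by move=> t t1; rewrite sqrtr_gt0; apply: lt_le_trans h1pos (hsum_ge_h1 _ t1).
have SB := sum_sqrt_bound T h1pos.
have bnd1 : \sum_(1 <= t < T.+1)
     (ftrl_obj f sigma G Ms t (Ms t) - ftrl_obj f sigma G Ms t (Ms t.+1)) <= sH / sigma.
  apply: (@le_trans _ _ (\sum_(1 <= t < T.+1) (hh G t / Num.sqrt (hsum G t)) / (2 * sigma))).
    apply: ler_sum_nat => t /andP[t1 _].
    apply: le_trans (step t t1).1 _.
    have -> : hh G t / Num.sqrt (hsum G t) / (2 * sigma)
        = hh G t / (2 * (sigma * Num.sqrt (hsum G t))).
      by field; rewrite !gt_eqF ?Hp.
    apply: ler_wpM2r; first by apply/ltW; rewrite invr_gt0; have := mulr_gt0 sp (Hp t t1); nra.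
    exact: le_trans (pip_le_gg _ _) (gg_le_hh _ t1).
  rewrite -mulr_suml.
  apply: le_trans (ler_wpM2r _ SB) _; first by apply/ltW; rewrite invr_gt0; nra.
  rewrite -/sH le_eqVlt; apply/orP; left; apply/eqP; field; by rewrite gt_eqF.
have bnd2 : Dsum Ms T - Dsum Ms 1 <= 2 * sH / sigma.
  have -> : Dsum Ms T - Dsum Ms 1 = \sum_(1 <= k < T) dd Ms k.
    by rewrite /Dsum (@big_cat_nat _ _ _ 1 0 T xpredT (dd Ms) isT hT) /= addrAC subrr add0r.
  apply: (@le_trans _ _ (\sum_(1 <= k < T.+1) dd Ms k)).
    by rewrite big_nat_recr //= lerDl dd_ge0.
  apply: (@le_trans _ _ (\sum_(1 <= t < T.+1) (hh G t / Num.sqrt (hsum G t)) / sigma)).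
    apply: ler_sum_nat => t /andP[t1 _].
    apply: le_trans (step t t1).2 _.
    have -> : hh G t / Num.sqrt (hsum G t) / sigma
        = hh G t / (sigma * Num.sqrt (hsum G t)).
      by field; rewrite !gt_eqF ?Hp.
    apply: ler_wpM2r; first by apply/ltW; rewrite invr_gt0; have := Hp t t1; nra.
    exact: le_trans (pnorm_le_gg _ _) (gg_le_hh _ t1).
  rewrite -mulr_suml.
  apply: le_trans (ler_wpM2r _ SB) _; first by rewrite invr_ge0 (ltW sp).
  by rewrite -/sH.
have bnd3 : ftrl_obj f sigma G Ms T (Ms T.+1)
    <= \sum_(1 <= t < T.+1) f t Mstar + 2 * kM ^+ 2 * (sigma * sH).
  apply: le_trans ((hftrl T hT).2 Mstar hMs) _.
  rewrite /ftrl_obj big_split /= lerD2l.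
  apply: (@le_trans _ _ (\sum_(1 <= s < T.+1) sig sigma G s * (2 * kM ^+ 2))).
    apply: ler_sum_nat => s /andP[s1 _].
    have hpn : pnorm (Mstar - Ms s) <= 2 * kM.
      apply: le_trans (pnorm_le_nu _) _; apply: le_trans (nuB _ _) _.
      have h1 : nu Mstar <= kM := hMs.
      have h2 : nu (Ms s) <= kM := Kt s s1.
      lra.
    have p0 := pnorm_ge0 (Mstar - Ms s).
    have sg0 := sig_ge0 G (ltW sp) s1.
    have hsq : pnorm (Mstar - Ms s) ^+ 2 <= 4 * kM ^+ 2 by rewrite !expr2; nra.
    have := ler_wpM2l sg0 hsq.
    lra.
  by rewrite -mulr_suml sum_sig -/sH mulrC.
have ft := F_tele f sigma G Ms T.
set D := Dsum Ms T - Dsum Ms 1 in hmis bnd2.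
have m1 : l * z * (D / delta ^+ 2) <= l * z * ((2 * sH / sigma) / delta ^+ 2).
  apply: ler_wpM2l; first by rewrite mulr_ge0.
  by apply: ler_wpM2r; first by apply/ltW; rewrite invr_gt0 exprn_gt0.
have key := final_alg d0 kMp r2p Sp e2 eS.
rewrite -/sigma in key.
have e3 : l * z * ((2 * sH / sigma) / delta ^+ 2) + (sH / sigma + 2 * kM ^+ 2 * (sigma * sH))
   = 2 * kM / delta * (r2 * S') * sH.
  rewrite -key; field; rewrite !gt_eqF //.
have e4 : Num.sqrt (2 * (delta ^+ 2 + 2 * l * z)) = r2 * S' by rewrite sqrtrM ?ler0n.
rewrite e4.
have L3 : 2 * kM / delta * (r2 * S') * sH
    <= 2 * kM / delta * (r2 * S' + l * z / (delta * Num.sqrt (hh G 1))) * sH.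
  apply: ler_wpM2r => //; apply: ler_wpM2l; first by apply: divr_ge0; [exact: ltW (mulr_gt0 two2 kMp) | exact: ltW d0].
  by rewrite lerDl; apply: divr_ge0; [exact: mulr_ge0 l0 z0 | exact: mulr_ge0 (ltW d0) (sqrtr_ge0 _)].
rewrite -/sH.
move: hmis bnd1 bnd3 ft m1 e3 L3; lra.
Qed.
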